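(* Let $\mathcal{H}$ be a finite family of digraphs containing a directed path $P$ of length $p$. Let $D$ be a digraph containing no subgraph isomorphic to a graph in $\mathcal{H}^-_p$, and let $k$ be an integer. Then $(D,k)$ is a yes-instance of $\mathcal{H}$-SCC Deletion if and only if it is a yes-instance of $\{P\}$-SCC Deletion.
   Context: Subgraphs are not necessarily induced; strong components are maximal sets of mutually reachable vertices. For a family $\mathcal{F}$, $\mathcal{F}$-SCC Deletion asks, given $(D,k)$, whether some $X\subseteq V(D)$ with $|X|\le k$ is such that no strong component of $D-X$ contains a subgraph isomorphic to a graph in $\mathcal{F}$. For a digraph $H$, $GPC(H)$ is the set of strongly connected digraphs $H\cup P_1\cup\dots\cup P_\ell$ (union of vertex and arc sets) where each $P_i$ is a directed path with both end-points in $V(H)$ and the ordered end-point pairs of the $P_i$ are pairwise distinct; $\{P_1,\dots,P_\ell\}$ is a witnessing collection of paths. $GPC(\mathcal{H})=\bigcup_{H\in\mathcal{H}}GPC(H)$. $\mathcal{H}^-_p$ is the set of digraphs in $GPC(\mathcal{H})$ admitting a witnessing collection of paths all of length at most $p-1$. *)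

(* Defs.v *)
From Stdlib Require List.
From mathcomp Require Import all_boot all_order all_algebra.
Import Order.TTheory GRing.Theory Num.Theory.

Record digraph := Digraph {
  dv :> finType;
  da : rel dv;
  da_irr : irreflexive da }.

Definition embeds (F G : digraph) : Prop :=
  exists f : dv F -> dv G, injective f /\ (forall x y, da F x y -> da G (f x) (f y)).

Definition del_rel (D : digraph) (X : {set dv D}) : rel (dv D) :=
  fun x y => [&& x \notin X, y \notin X & da D x y].

Definition strong_comp (D : digraph) (X : {set dv D}) (C : {set dv D}) : Prop :=
  exists x : dv D, x \notin X /\
    C = [set y | [&& y \notin X, connect (del_rel D X) x y & connect (del_rel D X) y x]].

Definition embeds_in (D : digraph) (C : {set dv D}) (F : digraph) : Prop :=
  exists f : dv F -> dv D, injective f /\ (forall v, f v \in C) /\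
    (forall x y, da F x y -> da D (f x) (f y)).

Definition SCC_yes (fam : digraph -> Prop) (D : digraph) (k : int) : Prop :=
  exists X : {set dv D}, (#|X|%:Z <= k)%R /\
    forall (F : digraph) (C : {set dv D}), fam F -> strong_comp D X C -> ~ embeds_in D C F.

Definition strongly_connected (G : digraph) : Prop :=
  forall x y : dv G, connect (da G) x y.

(* (x, s) is a directed path x -> s_1 -> ... -> s_n in G (vertices distinct); its
   length is size s, its end-points are x and last x s. *)
Definition dipath_in (G : digraph) (x : dv G) (s : seq (dv G)) : bool :=
  path (da G) x s && uniq (x :: s).

(* G belongs to GPC(H) with a witnessing collection of paths all of length <= p-1
   (i.e. < p), H being embedded into G via phi. *)
Definition in_GPC_short (H : digraph) (p : nat) (G : digraph) : Prop :=
  exists (phi : dv H -> dv G) (Ps : seq (dv G * seq (dv G))),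
    injective phi /\
    (forall a b, da H a b -> da G (phi a) (phi b)) /\
    (forall P, P \in Ps ->
       [/\ dipath_in G P.1 P.2, P.1 \in codom phi, last P.1 P.2 \in codom phi
         & size P.2 < p]) /\
    uniq [seq (P.1, last P.1 P.2) | P <- Ps] /\
    (forall v : dv G, v \in codom phi \/ exists2 P, P \in Ps & v \in P.1 :: P.2) /\
    (forall u v : dv G, da G u v ->
       (exists a b, [/\ phi a = u, phi b = v & da H a b])
       \/ exists2 P, P \in Ps & (u, v) \in zip (P.1 :: P.2) P.2) /\
    strongly_connected G.

Definition in_Hminus (Hs : seq digraph) (p : nat) (G : digraph) : Prop :=
  exists H, List.In H Hs /\ in_GPC_short H p G.

Definition is_dipath (P : digraph) (p : nat) : Prop :=
  exists s : seq (dv P), [/\ uniq s, size s = p.+1, (forall v, v \in s) &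
    forall u v, da P u v = ((u, v) \in zip s (behead s))].

(* Main.v *)
Require Import Defs.
From mathcomp Require Import all_boot all_order all_algebra.
From Stdlib Require List.
From Stdlib Require Import Lia.
From mathcomp Require Import zify.

Lemma path_zip (T : eqType) (e : rel T) x s :
  (forall u v, (u, v) \in zip (x :: s) s -> e u v) -> path e x s.
Proof.
elim: s x => [|y s IH] x //= H.
rewrite H ?mem_head //=; apply: IH => u v Huv; apply: H; by rewrite inE Huv orbT.
Qed.

Lemma zip_path (T : eqType) (e : rel T) x s u v :
  path e x s -> (u, v) \in zip (x :: s) s -> e u v.
Proof.
elim: s x => [|y s IH] x //= /andP[exy ps]; rewrite inE => /orP[/eqP[-> ->]//|].
exact: IH.
Qed.

Lemma path_mem_connect (T : finType) (e : rel T) x s v :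
  path e x s -> v \in x :: s -> connect e x v /\ connect e v (last x s).
Proof.
move=> ps vin; split; first exact: path_connect ps _ vin.
case/splitPl: s / vin ps => p q <-.
rewrite cat_path last_cat => /andP[_ pq]; apply/connectP; by exists q.
Qed.

Lemma uniq_last_nil (T : eqType) (x : T) s : uniq (x :: s) -> last x s = x -> s = [::].
Proof.
case: s => [//|y s] /= /andP[xn _] hl; move: (mem_last y s); rewrite hl => h.
by rewrite h in xn.
Qed.

Lemma map_val_pmap (T : eqType) (p : pred T) (sT : subEqType p) (s : seq T) :
  all p s -> map val (pmap (insub : T -> option sT) s) = s.
Proof. by move=> al; rewrite (pmap_filter (insubK _)) (eq_filter (isSome_insub _)); apply/all_filterP. Qed.

Lemma zip_map2 (T U : Type) (f : T -> U) (s t : seq T) :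
  zip (map f s) (map f t) = map (fun p => (f p.1, f p.2)) (zip s t).
Proof. by elim: s t => [|x s IH] [|y t] //=; rewrite IH. Qed.

Definition VT (T : finType) (V : {set T}) := {v : T | v \in V}.

Lemma build (D H : digraph) (p : nat) (f : dv H -> dv D)
  (spath : dv H -> dv H -> seq (dv D)) :
  injective f -> (forall a b, da H a b -> da D (f a) (f b)) ->
  (forall a b, [/\ path (da D) (f a) (spath a b), uniq (f a :: spath a b),
     last (f a) (spath a b) = f b & size (spath a b) < p]) ->
  exists G : digraph, in_GPC_short H p G /\ embeds G D.
Proof.
move=> fi fH sp.
have sp0 : forall a, spath a a = [::].
  by move=> a; case: (sp a a) => _ u l _; apply: uniq_last_nil u l.
pose V := [set v : dv D | [exists a, exists b, v \in f a :: spath a b]].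
pose eD := fun u v : dv D => [exists a, exists b, (da H a b && (f a == u) && (f b == v))
   || ((u,v) \in zip (f a :: spath a b) (spath a b))].
have eDD : forall u v, eD u v -> da D u v.
  move=> u v /existsP[a /existsP[b /orP[/andP[/andP[hab /eqP<-] /eqP<-]|hz]]].
    exact: fH.
  by case: (sp a b) => ps _ _ _; apply: zip_path ps hz.
pose T : finType := VT (dv D) V.
pose eG : rel T := fun x y => eD (val x) (val y).
have irr : irreflexive eG.
  move=> x; apply/negbTE/negP => h; by move: (eDD _ _ h); rewrite da_irr.
pose G := @Digraph T eG irr.
exists G; split; last first.
  by exists val; split; [exact: val_inj | move=> x y h; exact: eDD h].
have fV : forall a, f a \in V.
  by move=> a; rewrite inE; apply/existsP; exists a; apply/existsP; exists a; rewrite mem_head.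
have sV : forall a b, all (fun v => v \in V) (spath a b).
  move=> a b; apply/allP => v hv; rewrite inE; apply/existsP; exists a; apply/existsP; exists b.
  by rewrite inE hv orbT.
pose phi : dv H -> T := fun a => exist _ (f a) (fV a).
have phi_inj : injective phi by move=> a b /(congr1 val) /= /fi.
pose lift := fun s : seq (dv D) => pmap (insub : dv D -> option T) s.
have liftK : forall a b, map val (lift (spath a b)) = spath a b.
  by move=> a b; apply: map_val_pmap.
have lastP : forall a b, last (phi a) (lift (spath a b)) = phi b.
  move=> a b; apply: val_inj; rewrite -last_map liftK /=.
  by case: (sp a b).
have pathG : forall a b, path eG (phi a) (lift (spath a b)).
  move=> a b.
  have h : path eD (val (phi a)) (map val (lift (spath a b))).
    rewrite liftK; apply: path_zip => u v huv; apply/existsP; exists a; apply/existsP; exists b.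
    by rewrite huv orbT.
  by rewrite path_map in h.
have uniqG : forall a b, uniq (phi a :: lift (spath a b)).
  move=> a b; rewrite -(map_inj_uniq val_inj) /= liftK.
  by case: (sp a b).
pose pairs := [seq ab <- enum (@predT (dv H * dv H)) | ab.1 != ab.2].
pose Ps := [seq (phi ab.1, lift (spath ab.1 ab.2)) | ab <- pairs].
have inPs : forall a b, a != b -> (phi a, lift (spath a b)) \in Ps.
  by move=> a b ab; apply/mapP; exists (a, b); rewrite // mem_filter mem_enum ab.
have cover : forall v : T, v \in codom phi \/
    exists a b, [/\ a != b, (phi a, lift (spath a b)) \in Ps & v \in lift (spath a b)].
  move=> v; have := valP v; rewrite inE => /existsP[a /existsP[b]].
  rewrite inE => /orP[/eqP e|hv].
    by left; apply/codomP; exists a; apply: val_inj.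
  have ab : a != b by apply/negP => /eqP eab; move: hv; rewrite eab sp0.
  right; exists a, b; split => //; first exact: inPs.
  by rewrite mem_pmap_sub.
have conn_ab : forall a b, connect eG (phi a) (phi b).
  by move=> a b; apply/connectP; exists (lift (spath a b)); rewrite ?pathG ?lastP.
exists phi, Ps.
split; first exact: phi_inj.
split.
  move=> a b hab; rewrite /= /eG /=; apply/existsP; exists a; apply/existsP; exists b.
  by rewrite hab !eqxx.
split.
  move=> P /mapP[[a b] hab ->] /=; split.
  - by rewrite /dipath_in pathG uniqG.
  - exact: codom_f.
  - by rewrite lastP codom_f.
  - by rewrite -(size_map val) liftK; case: (sp a b).
split.
  have -> : [seq (P.1, last P.1 P.2) | P <- Ps] = [seq (phi ab.1, phi ab.2) | ab <- pairs].
    by rewrite -map_comp; apply: eq_map => -[a b] /=; rewrite lastP.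
  rewrite map_inj_uniq; first by rewrite filter_uniq // enum_uniq.
  move=> [a b] [c d] /= [] e1 e2.
  by rewrite (fi _ _ e1) (fi _ _ e2).
split.
  move=> v; case: (cover v) => [h|[a [b [ab inP hv]]]]; first by left.
  by right; exists (phi a, lift (spath a b)) => //; rewrite inE hv orbT.
split.
  move=> u v /existsP[a /existsP[b /orP[/andP[/andP[hab /eqP e1] /eqP e2]|hz]]].
    by left; exists a, b; split => //; apply: val_inj.
  have ab : a != b by apply/negP => /eqP eab; move: hz; rewrite eab sp0.
  right; exists (phi a, lift (spath a b)); first exact: inPs.
  rewrite /= -(mem_map (f := fun q : T * T => (val q.1, val q.2))); last first.
    by move=> [x1 y1] [x2 y2] /= [/val_inj -> /val_inj ->].
  by rewrite -zip_map2 /= liftK.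
have cv : forall v, exists a, connect eG (phi a) v && connect eG v (phi a).
  move=> v; case: (cover v) => [/codomP[a ->]|[a [b [ab _ hv]]]].
    by exists a; rewrite connect0.
  have [c1 c2] : connect eG (phi a) v /\ connect eG v (last (phi a) (lift (spath a b))).
    by apply: path_mem_connect (pathG a b) _; rewrite inE hv orbT.
  exists a; rewrite c1 /=; apply: connect_trans (conn_ab b a).
  by rewrite -(lastP a b).
move=> x y.
have [a1 /andP[_ h1]] := cv x; have [a2 /andP[h2 _]] := cv y.
exact: connect_trans (connect_trans h1 (conn_ab a1 a2)) h2.
Qed.
Lemma zip_behead_idx (T : eqType) (s : seq T) u v :
  (u, v) \in zip s (behead s) -> uniq s ->
  exists i, [/\ i.+1 < size s, u = nth u s i & v = nth u s i.+1].
Proof.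
move=> /(nthP (u, v))[i]; rewrite nth_zip_cond => hi; rewrite hi.
rewrite size_zip size_behead in hi.
have hi' : i.+1 < size s by lia.
move=> [<- <-] _; exists i; split => //; rewrite ?nth_behead.
- by apply: set_nth_default; lia.
- by apply: set_nth_default.
Qed.

Lemma path_embed (D P : digraph) (p : nat) (e : rel (dv D)) (C : {set dv D}) x s :
  is_dipath P p -> subrel e (da D) -> path e x s -> uniq (x :: s) ->
  {subset x :: s <= C} -> p <= size s -> embeds_in D C P.
Proof.
move=> [sP [uP szP allP arcP]] eD ps us sC hp.
pose g := fun u : dv P => nth x (x :: s) (index u sP).
have ilt : forall u, index u sP < size (x :: s).
  by move=> u; rewrite /= ltnS (leq_trans _ hp) // -ltnS -szP index_mem.
exists g; split; [|split].
- move=> u v /eqP; rewrite /g nth_uniq // => /eqP hi.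
  by rewrite -(nth_index u (allP u)) hi nth_index.
- by move=> u; apply: sC; apply: mem_nth.
- move=> u v; rewrite arcP => /zip_behead_idx /(_ uP) [i [hi -> ->]].
  rewrite /g !index_uniq //; last by lia.
  have hs : i < size s by move: hi; rewrite szP; lia.
  apply: eD; move/pathP: ps => /(_ x i hs).
  by [].
Qed.

Lemma del_notX (D : digraph) (X : {set dv D}) x y :
  connect (del_rel D X) x y -> x \notin X -> y \notin X.
Proof.
move=> /connectP[s ps ->]; elim: s x ps => [|z s IH] x //= /andP[hxz ps] _.
apply: IH ps _; by case/and3P: hxz.
Qed.

Theorem lemma26 (Hs : seq digraph) (P : digraph) (p : nat) (D : digraph) (k : int) :
  List.In P Hs -> is_dipath P p ->
  (forall G : digraph, in_Hminus Hs p G -> ~ embeds G D) ->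
  (SCC_yes (fun F => List.In F Hs) D k <-> SCC_yes (fun F => F = P) D k).
Proof.
move=> PinHs Pdip noG; split.
  case=> X [hk hX]; exists X; split=> // F C -> hC; exact: hX P C PinHs hC.
case=> X [hk hX]; exists X; split=> // H C HinHs hC [f [fi [fC fa]]].
have hC' := hC; case: hC' => x0 [x0X defC].
set e := del_rel D X.
have inC : forall v, v \in C -> connect e x0 v /\ connect e v x0.
  by move=> v; rewrite defC inE => /and3P[_ h1 h2].
have cab : forall a b, connect e (f a) (f b).
  move=> a b; have [_ h1] := inC _ (fC a); have [h2 _] := inC _ (fC b).
  exact: connect_trans h1 h2.
have ex : forall a b, exists s, [&& path e (f a) s, uniq (f a :: s) & last (f a) s == f b].
  move=> a b; case/connectP: (cab a b) => s ps ->.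
  case: (shortenP ps) => s' ps' us' _; exists s'; by rewrite ps' us' eqxx.
pose spath a b := xchoose (ex a b).
have sp : forall a b, [&& path e (f a) (spath a b), uniq (f a :: spath a b) & last (f a) (spath a b) == f b].
  by move=> a b; exact: xchooseP (ex a b).
have spC : forall a b v, v \in f a :: spath a b -> v \in C.
  move=> a b v hv; case/and3P: (sp a b) => ps _ /eqP hl.
  have [c1 c2] : connect e (f a) v /\ connect e v (last (f a) (spath a b)) by apply: path_mem_connect ps hv.
  rewrite hl in c2.
  have [h1 _] := inC _ (fC a); have [_ h2] := inC _ (fC b).
  have h3 : connect e x0 v by exact: connect_trans h1 c1.
  have h4 : connect e v x0 by exact: connect_trans c2 h2.
  rewrite defC inE; apply/and3P; split => //.
  exact: del_notX h3 x0X.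
have slen : forall a b, size (spath a b) < p.
  move=> a b; rewrite ltnNge; apply/negP => hp.
  case/and3P: (sp a b) => ps us _.
  apply: (hX P C erefl hC).
  apply: (@path_embed D P p e C (f a) (spath a b) Pdip _ ps us _ hp).
    by move=> u v /and3P[].
  exact: spC.
have eH : forall a b, da H a b -> da D (f a) (f b) by [].
have sp' : forall a b, [/\ path (da D) (f a) (spath a b), uniq (f a :: spath a b),
     last (f a) (spath a b) = f b & size (spath a b) < p].
  move=> a b; case/and3P: (sp a b) => ps us /eqP hl; split => //.
  by apply: sub_path ps => u v /and3P[].
have [G [hG eG]] := @build D H p f spath fi eH sp'.
exact: noG G (ex_intro _ H (conj HinHs hG)) eG.
Qed.
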